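(* Let $a^*\in A$ be a pure strategy profile of $G$. If for every $\bar p\in(0,1)$ there exists $p\in(0,\bar p)$ such that $a^*$ is stable for the degree of observability $p$, then $a^*$ is a Nash equilibrium of $G$.
   Context: Objective game: $G=(N,A,\pi)$ is a finite $n$-player normal-form game, $N=\{1,\dots,n\}$, finite action sets $A_i$, $A=\prod_iA_i$, fitness functions $\pi_i:A\to\mathbb{R}$ extended multilinearly to $\prod_i\Delta(A_i)$. Preference types: $\Theta=\mathbb{R}^A$ (extended multilinearly). $\mathcal{M}(\Theta^n)$: product distributions $\mu=\mu_1\times\dots\times\mu_n$ with finitely supported marginals; $\operatorname{supp}\mu=\prod_i\operatorname{supp}\mu_i$, $\mu(\theta)=\prod_i\mu_i(\theta_i)$, $\mu_{-i}(\theta_{-i})=\prod_{j\ne i}\mu_j(\theta_j)$. Mutants: for nonempty $J\subseteq N$, $\tilde\theta_J\in\prod_{j\in J}(\Theta\setminus\operatorname{supp}\mu_j)$ with shares $\varepsilon\in(0,1)^{|J|}$, $\|\varepsilon\|=\max_j\varepsilon_j$; post-entry $\tilde\mu^\varepsilon_i=(1-\varepsilon_i)\mu_i+\varepsilon_i\delta_{\tilde\theta_i}$ for $i\in J$, $\mu_i$ otherwise. Partial observability with degree $p\in(0,1)$: each player independently observes opponents' types with probability $p$ and otherwise knows only $\mu_{-i}$. Strategies: $b:\operatorname{supp}\mu\to\prod_i\Delta(A_i)$ (play when observing) and $s_i:\operatorname{supp}\mu_i\to\Delta(A_i)$ (play when not observing), $s(\theta)=(s_i(\theta_i))_i$. For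 a matched profile $\theta$ and the set $T\subseteq N$ of non-observing players, the profile played is $(s(\theta)_T,b(\theta)_{-T})$. $(b,s)$ is an equilibrium if for all $\theta\in\operatorname{supp}\mu$ and $i$: $b_i(\theta)\in\arg\max_{\sigma_i}\sum_{T\subseteq N\setminus\{i\}}p^{n-1-|T|}(1-p)^{|T|}\theta_i(\sigma_i,(s_{-i}(\theta_{-i})_T,b_{-i}(\theta)_{-T}))$ and $s_i(\theta_i)\in\arg\max_{\sigma_i}\sum_{\theta'_{-i}}\mu_{-i}(\theta'_{-i})\sum_{T\subseteq N\setminus\{i\}}p^{n-1-|T|}(1-p)^{|T|}\theta_i(\sigma_i,(s_{-i}(\theta'_{-i})_T,b_{-i}(\theta_i,\theta'_{-i})_{-T}))$; $B_p(\mu)$ is the set of these; $(\mu,b,s)$ is a configuration. Aggregate outcome: $\varphi_{\mu,b,s}(a)=\sum_{\theta}\mu(\theta)\sum_{T\subseteq N}p^{n-|T|}(1-p)^{|T|}\prod_i(s(\theta)_T,b(\theta)_{-T})_i(a_i)$. Average fitness: $\Pi_{\theta_i}(\mu;b,s)=\sum_{\theta'_{-i}}\mu_{-i}(\theta'_{-i})\sum_{T\subseteq N}p^{n-|T|}(1-p)^{|T|}\pi_i(s(\theta_i,\theta'_{-i})_T,b(\theta_i,\theta'_{-i})_{-T})$. Balanced: equal average fitness of all types within each population. Nearby set: $B_p^\eta(\tilde\mu^\varepsilon;b,s)=\{(\tilde b,\tilde s)\in B_p(\tilde\mu^\varepsilon):\max_i\|\tilde b_i(\theta)-b_i(\theta)\|\le\eta,\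 \max_i\|\tilde s_i(\theta_i)-s_i(\theta_i)\|\le\eta\ \forall\theta\in\operatorname{supp}\mu\}$. $(\mu,b,s)$ is stable (for degree $p$) if balanced and for every nonempty $J$, every $\tilde\theta_J$, every $\eta>0$, there are $\bar\eta\in[0,\eta)$, $\bar\epsilon\in(0,1)$ such that for all $\varepsilon$ with $\|\varepsilon\|\in(0,\bar\epsilon)$, $B_p^{\bar\eta}(\tilde\mu^\varepsilon;b,s)\ne\emptyset$ and each of its elements satisfies (i) some $j\in J$ has $\Pi_{\theta_j}>\Pi_{\tilde\theta_j}$ (post-entry) for all $\theta_j\in\operatorname{supp}\mu_j$, or (ii) for every $i$ all types in $\operatorname{supp}\tilde\mu^\varepsilon_i$ have equal post-entry average fitness. A pure profile $a^*$ is stable for degree $p$ if the point mass at $a^*$ is the aggregate outcome of a stable configuration for $p$. *)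

(* Defs.v *)
From HB Require Import structures.
From mathcomp Require Import all_boot all_order all_algebra.
Set Implicit Arguments.
Unset Strict Implicit.
Unset Printing Implicit Defensive.
Import Order.TTheory GRing.Theory Num.Theory.
Local Open Scope ring_scope.

Section EvoGame.
Variable R : realFieldType.
Variable n : nat.
Variable A : 'I_n -> finType.
Variable pi : 'I_n -> {dffun forall i : 'I_n, A i} -> R.   (* fitness functions *)
Variable p : R.                         (* degree of observability *)

(* pure profiles, preference types Theta = R^A, type profiles *)
Local Notation prof := {dffun forall i : 'I_n, A i}.
Local Notation Theta := {ffun prof -> R}.
Local Notation tprof := ('I_n -> {ffun prof -> R}).
Local Notation mixed i := {ffun A i -> R}.
Local Notation mprof := (forall i : 'I_n, {ffun A i -> R}).

Definition is_mixed (i : 'I_n) (x : mixed i) :=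
  (forall a, 0 <= x a) /\ \sum_(a : A i) x a = 1.

Definition payoff (u : prof -> R) (tau : mprof) : R :=
  \sum_(a : prof) (\prod_(j < n) tau j (a j)) * u a.

Definition payoff_dev (u : prof -> R) (i : 'I_n) (sigma : mixed i) (tau : mprof) : R :=
  \sum_(a : prof) sigma (a i) * (\prod_(j < n | j != i) tau j (a j)) * u a.

(* A finitely supported distribution on Theta, given by its support s and
   weights w: s duplicate free, weights positive on s, summing to 1. *)
Definition is_fsdist (s : seq Theta) (w : Theta -> R) :=
  [/\ uniq s, (forall t, t \in s -> 0 < w t) & \sum_(t <- s) w t = 1].

(* a product distribution mu = mu_1 x ... x mu_n is given by S (supports)
   and w (weights) *)
Definition in_supp (S : 'I_n -> seq Theta) (th : tprof) := forall i, th i \in S i.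

Definition th0 : Theta := [ffun => 0].

Definition prof_of (S : 'I_n -> seq Theta)
  (k : {dffun forall i : 'I_n, 'I_(size (S i))}) : tprof :=
  fun i => nth th0 (S i) (k i).

Definition Emu (S : 'I_n -> seq Theta) (w : 'I_n -> Theta -> R) (f : tprof -> R) : R :=
  \sum_(k : {dffun forall i : 'I_n, 'I_(size (S i))})
     (\prod_(j < n) w j (@prof_of S k j)) * f (@prof_of S k).

Definition Emi (S : 'I_n -> seq Theta) (w : 'I_n -> Theta -> R) (i : 'I_n) (t : Theta)
  (g : tprof -> R) : R :=
  \sum_(k : {dffun forall i : 'I_n, 'I_(size (S i))} | (k i : nat) == index t (S i))
     (\prod_(j < n | j != i) w j (@prof_of S k j)) * g (@prof_of S k).

Definition mixT (T : {set 'I_n}) (b : tprof -> mprof) (s : forall i : 'I_n, Theta -> mixed i)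
  (th : tprof) : mprof :=
  fun j => if j \in T then s j (th j) else b th j.

Definition wgt1 (T : {set 'I_n}) : R := p ^+ (n.-1 - #|T|) * (1 - p) ^+ #|T|.
Definition wgt (T : {set 'I_n}) : R := p ^+ (n - #|T|) * (1 - p) ^+ #|T|.

(* objective of player i when observing, at type profile th *)
Definition Vb (b : tprof -> mprof) (s : forall i : 'I_n, Theta -> mixed i)
  (i : 'I_n) (th : tprof) (sigma : mixed i) : R :=
  \sum_(T : {set 'I_n} | i \notin T)
     wgt1 T * payoff_dev (fun a => th i a) sigma (mixT T b s th).

(* objective of player i of type t when not observing *)
Definition Vs (S : 'I_n -> seq Theta) (w : 'I_n -> Theta -> R)
  (b : tprof -> mprof) (s : forall i : 'I_n, Theta -> mixed i)
  (i : 'I_n) (t : Theta) (sigma : mixed i) : R :=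
  Emi S w i t (fun th' => Vb b s th' sigma).

Definition is_eq (S : 'I_n -> seq Theta) (w : 'I_n -> Theta -> R)
  (b : tprof -> mprof) (s : forall i : 'I_n, Theta -> mixed i) :=
  (forall th, in_supp S th -> forall i : 'I_n,
      is_mixed (b th i) /\
      forall sigma : mixed i, is_mixed sigma -> Vb b s th sigma <= Vb b s th (b th i))
  /\
  (forall (i : 'I_n) (t : Theta), t \in S i ->
      is_mixed (s i t) /\
      forall sigma : mixed i, is_mixed sigma -> Vs S w b s t sigma <= Vs S w b s t (s i t)).

Definition outcome (S : 'I_n -> seq Theta) (w : 'I_n -> Theta -> R)
  (b : tprof -> mprof) (s : forall i : 'I_n, Theta -> mixed i) (a : prof) : R :=
  Emu S w (fun th => \sum_(T : {set 'I_n}) wgt T * \prod_(j < n) mixT T b s th j (a j)).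

Definition fitness (S : 'I_n -> seq Theta) (w : 'I_n -> Theta -> R)
  (b : tprof -> mprof) (s : forall i : 'I_n, Theta -> mixed i) (i : 'I_n) (t : Theta) : R :=
  Emi S w i t (fun th => \sum_(T : {set 'I_n}) wgt T * payoff (pi i) (mixT T b s th)).

Definition balanced (S : 'I_n -> seq Theta) (w : 'I_n -> Theta -> R)
  (b : tprof -> mprof) (s : forall i : 'I_n, Theta -> mixed i) :=
  forall (i : 'I_n) (t t' : Theta), t \in S i -> t' \in S i ->
    fitness S w b s i t = fitness S w b s i t'.

Definition mdist (i : 'I_n) (x y : mixed i) : R :=
  \big[Num.max/0]_(a : A i) `|x a - y a|.

(* post-entry population: supports and weights *)
Definition postS (S : 'I_n -> seq Theta) (J : {set 'I_n}) (tt : tprof) (i : 'I_n) : seq Theta :=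
  if i \in J then rcons (S i) (tt i) else S i.

Definition postw (w : 'I_n -> Theta -> R) (J : {set 'I_n}) (tt : tprof) (eps : 'I_n -> R)
  (i : 'I_n) (t : Theta) : R :=
  if i \in J then (if t == tt i then eps i else (1 - eps i) * w i t) else w i t.

Definition nearby (S : 'I_n -> seq Theta) (b : tprof -> mprof) (s : forall i : 'I_n, Theta -> mixed i)
  (S' : 'I_n -> seq Theta) (w' : 'I_n -> Theta -> R) (eta : R)
  (b' : tprof -> mprof) (s' : forall i : 'I_n, Theta -> mixed i) :=
  is_eq S' w' b' s' /\
  forall th, in_supp S th -> forall i : 'I_n,
    mdist (b' th i) (b th i) <= eta /\ mdist (s' i (th i)) (s i (th i)) <= eta.

Definition stable (S : 'I_n -> seq Theta) (w : 'I_n -> Theta -> R)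
  (b : tprof -> mprof) (s : forall i : 'I_n, Theta -> mixed i) :=
  balanced S w b s /\
  forall (J : {set 'I_n}), J != set0 ->
  forall tt : tprof, (forall j, j \in J -> tt j \notin S j) ->
  forall eta : R, 0 < eta ->
  exists etab epsb : R, [/\ 0 <= etab, etab < eta, 0 < epsb & epsb < 1] /\
  forall eps : 'I_n -> R,
    (forall j, j \in J -> 0 < eps j /\ eps j < 1) ->
    0 < \big[Num.max/0]_(j in J) eps j -> \big[Num.max/0]_(j in J) eps j < epsb ->
    (exists b' s', nearby S b s (postS S J tt) (postw w J tt eps) etab b' s') /\
    (forall b' s', nearby S b s (postS S J tt) (postw w J tt eps) etab b' s' ->
       (exists2 j, j \in J & forall t, t \in S j ->
           fitness (postS S J tt) (postw w J tt eps) b' s' j (tt j)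
           < fitness (postS S J tt) (postw w J tt eps) b' s' j t)
       \/
       (forall (i : 'I_n) (t t' : Theta), t \in postS S J tt i -> t' \in postS S J tt i ->
           fitness (postS S J tt) (postw w J tt eps) b' s' i t
           = fitness (postS S J tt) (postw w J tt eps) b' s' i t')).

Definition stable_profile (astar : prof) :=
  exists (S : 'I_n -> seq Theta) (w : 'I_n -> Theta -> R)
         (b : tprof -> mprof) (s : forall i : 'I_n, Theta -> mixed i),
    [/\ (forall i, is_fsdist (S i) (w i)),
        is_eq S w b s,
        stable S w b s &
        forall a : prof, outcome S w b s a = (a == astar)%:R].

End EvoGame.

Definition nash (R : realFieldType) (n : nat) (A : 'I_n -> finType)
  (pi : 'I_n -> {dffun forall i : 'I_n, A i} -> R) (astar : {dffun forall i : 'I_n, A i}) :=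
  forall (i : 'I_n) (a : {dffun forall i : 'I_n, A i}),
    (forall j, j != i -> a j = astar j) -> pi i a <= pi i astar.

(* Main.v *)
Require Import Defs.
From HB Require Import structures.
From mathcomp Require Import all_boot all_order all_algebra.
From mathcomp Require Import ring lra.
From Stdlib Require Import FunctionalExtensionality.
Set Implicit Arguments. Unset Strict Implicit. Unset Printing Implicit Defensive.
Import Order.TTheory GRing.Theory Num.Theory.
Local Open Scope ring_scope.

Section Gen.
Variable R : realFieldType.
Variable n : nat.
Variable A : 'I_n -> finType.
Local Notation prof := {dffun forall i : 'I_n, A i}.
Local Notation mprof := (forall i : 'I_n, {ffun A i -> R}).

Lemma sumprod (tau : mprof) :
  \sum_(a : prof) \prod_(j < n) tau j (a j) = \prod_(j < n) \sum_(x : A j) tau j x.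
Proof.
transitivity (\prod_(j < n) \sum_(y in tagged_with A j) untag 0 (tau j) y).
  2: by apply: eq_bigr => j _; rewrite (big_tag (fun j x => tau j x)).
rewrite bigA_distr_big_dep.
rewrite -big_fprod.
rewrite (reindex (@fprod_of_dffun _ A)); last exact/onW_bij/fprod_of_dffun_bij.
apply: eq_bigr => a _; apply: eq_big => // j; by rewrite fprodE.
Qed.

Lemma mixed_le1 i (x : {ffun A i -> R}) : is_mixed x -> forall y, 0 <= x y <= 1.
Proof. case=> H0 H1 y; rewrite H0 /= -H1 (bigD1 y) //= lerDl sumr_ge0 //. Qed.

Lemma mixed_pt i (x : {ffun A i -> R}) d : is_mixed x -> 1 <= x d -> forall y, x y = (y == d)%:R.
Proof.
move=> Hx Hd; have [H0 H1] := Hx.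
have xd : x d = 1 by apply/eqP; rewrite eq_le Hd (andP (mixed_le1 Hx d)).2.
have H : \sum_(y | y != d) x y = 0.
  by move: H1; rewrite (bigD1 d) //= xd => /eqP; rewrite -subr_eq0 addrAC subrr add0r => /eqP.
move=> y; case: eqVneq => [->|yd]; first by rewrite xd.
exact: (psumr_eq0P (fun y _ => H0 y) H).
Qed.

Lemma prod01 (F : 'I_n -> R) l : (forall j, 0 <= F j <= 1) -> \prod_j F j <= F l.
Proof.
move=> H; rewrite (bigD1 l) //= -{2}[F l]mulr1 ler_wpM2l //; first by case/andP: (H l).
by apply: prodr_ile1 => j _; exact: H.
Qed.

Lemma sum_mixed (tau : mprof) : (forall j, is_mixed (tau j)) ->
  \sum_(a:prof) \prod_j tau j (a j) = 1.
Proof. by move=> H; rewrite sumprod big1 // => j _; case: (H j). Qed.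

Lemma close_payoff (u : prof -> R) (tau : mprof) (c : prof) (e : R) :
 (forall j, is_mixed (tau j)) -> (forall l x, x != c l -> tau l x <= e) ->
 `|payoff u tau - u c| <= e * \sum_(a : prof) `|u a - u c|.
Proof.
move=> Hm He.
have -> : payoff u tau - u c = \sum_(a : prof) (\prod_j tau j (a j)) * (u a - u c).
  rewrite /payoff; symmetry; under eq_bigr do rewrite mulrBr.
  by rewrite sumrB -mulr_suml sum_mixed // mul1r.
rewrite mulr_sumr; apply: (le_trans (ler_norm_sum _ _ _)); apply: ler_sum => a _.
have P0 : 0 <= \prod_j tau j (a j) by apply: prodr_ge0 => j _; case: (Hm j) => H _; exact: H.
rewrite normrM (ger0_norm P0).
case: (eqVneq a c) => [->|ac]; first by rewrite subrr normr0 !mulr0.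
rewrite ler_wpM2r //.
have [l Hl] : exists l, a l != c l.
  apply/existsP; apply: contraNT ac => /existsPn H; apply/eqP/ffunP => l; exact/eqP/negPn/H.
apply: le_trans (He l _ Hl); apply: prod01 => j; exact: mixed_le1.
Qed.

Lemma payoff_devE u i (sigma : {ffun A i -> R}) (tau : mprof) :
  payoff_dev u sigma tau = payoff u (dfwith tau sigma).
Proof.
rewrite /payoff_dev /payoff; apply: eq_bigr => a _; congr (_ * _).
rewrite [RHS](bigD1 i) //= dfwith_in; congr (_ * _); apply: eq_bigr => j ji.
by rewrite dfwith_out // eq_sym.
Qed.

Lemma payoff_pure (c : R) i d (tau : mprof) : (forall j, is_mixed (tau j)) ->
  payoff (fun a : prof => c * (a i == d)%:R) tau = c * tau i d.
Proof.
move=> Hm.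
pose tau' := dfwith tau [ffun x => tau i x * (x == d)%:R].
have E : forall a : prof, (\prod_j tau j (a j)) * (c * (a i == d)%:R)
   = c * \prod_j tau' j (a j).
  move=> a; rewrite (bigD1 i) //= [in RHS](bigD1 i) //= /tau' dfwith_in ffunE.
  rewrite [in RHS](eq_bigr (fun j => tau j (a j))); first by ring.
  by move=> j ji; rewrite dfwith_out // eq_sym.
rewrite /payoff (eq_bigr _ (fun a _ => E a)) -mulr_sumr sumprod; congr (_ * _).
rewrite (bigD1 i) //= [X in _ * X]big1 ?mulr1.
  rewrite /tau' dfwith_in (bigD1 d) //= ffunE eqxx mulr1 big1 ?addr0 // => y yd.
  by rewrite ffunE (negbTE yd) mulr0.
by move=> j ji; rewrite /tau' dfwith_out 1?eq_sym //; case: (Hm j).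
Qed.

Lemma le_bigmax_seq (T : eqType) (r : seq T) (F : T -> R) x : x \in r ->
  F x <= \big[Num.max/0]_(a <- r) F a.
Proof.
elim: r => // y r IH; rewrite inE big_cons => /orP[/eqP->|/IH H]; rewrite le_max ?lexx //.
by rewrite H orbT.
Qed.

Lemma mdist_le i (x y : {ffun A i -> R}) e : mdist x y <= e -> forall a, `|x a - y a| <= e.
Proof.
move=> H a; apply: le_trans H; rewrite /mdist.
exact: (le_bigmax_seq (fun a => `|x a - y a|) (mem_index_enum a)).
Qed.


Lemma sum_pos (I : finType) (P : pred I) (X : I -> R) :
  (exists k0, P k0) -> (forall k, P k -> 0 < X k) -> 0 < \sum_(k | P k) X k.
Proof.
move=> [k0 Pk0] H; rewrite (bigD1 k0) //= ltr_wpDr ?H //.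
by apply: sumr_ge0 => k /andP[Pk _]; apply: ltW; apply: H.
Qed.

Lemma pure_of_zero (tau : mprof) (c : prof) : (forall j, is_mixed (tau j)) ->
  (forall a : prof, a != c -> \prod_j tau j (a j) = 0) ->
  forall l x, tau l x = (x == c l)%:R.
Proof.
move=> Hm H0 l; apply: mixed_pt => //.
have E : \prod_j tau j (c j) = 1.
  by have := sum_mixed Hm; rewrite (bigD1 c) //= [X in _ + X]big1 ?addr0 // => a ac; exact: H0.
by rewrite -E; apply: prod01 => j; exact: mixed_le1.
Qed.

End Gen.

Section Upd.
Variable I : finType.
Variable T : I -> finType.
Variable R : realFieldType.

Definition upd (k : {dffun forall j, T j}) i (y : T i) : {dffun forall j, T j} :=
  [ffun j => dfwith (fun j => k j) y j].

Lemma upd_in k i (y : T i) : upd k y i = y.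
Proof. by rewrite /upd ffunE dfwith_in. Qed.

Lemma upd_out k i (y : T i) j : i != j -> upd k y j = k j.
Proof. by move=> ij; rewrite /upd ffunE dfwith_out. Qed.

Lemma upd_upd k i (x y : T i) : upd (upd k y) x = upd k x.
Proof.
apply/ffunP => j; case: (eqVneq i j) => [<-|ij]; first by rewrite !upd_in.
by rewrite !upd_out.
Qed.

Lemma upd_id k i : upd k (k i) = k.
Proof.
apply/ffunP => j; case: (eqVneq i j) => [<-|ij]; first by rewrite !upd_in.
by rewrite !upd_out.
Qed.

Lemma reidx (F : {dffun forall j, T j} -> R) i (x y : T i) :
  \sum_(k : {dffun forall j, T j} | k i == x) F k = \sum_(k : {dffun forall j, T j} | k i == y) F (upd k x).
Proof.
rewrite (reindex_onto (fun k => upd k x) (fun k => upd k y)) /=; last first.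
  by move=> k /eqP <-; rewrite upd_upd upd_id.
apply: eq_bigl => k; rewrite upd_in eqxx /= upd_upd.
apply/eqP/eqP => [<-|H]; first by rewrite upd_in.
by rewrite -H upd_id.
Qed.
End Upd.

Lemma final_ineq (R : realFieldType) (X Y d K1 K2 e ua us h N p : R) :
 ua - us = d -> 0 < d -> 0 <= K1 -> 0 <= K2 -> 0 <= e -> e <= 1 -> 2*e*(K1+K2) < d ->
 h <= X -> 0 < h -> 0 <= Y -> Y <= N * p -> 0 <= N -> 0 <= p -> 2 * N * p*(K1+K2) < h*d ->
 0 < X*(ua - e*K2) + Y*(ua - K2) - (X+Y)*(us + e*K1).
Proof.
move=> Hd d0 K10 K20 e0 e1 HeK hX h0 Y0 YN N0 p0 HN.
have E : X*(ua - e*K2) + Y*(ua - K2) - (X+Y)*(us + e*K1) =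
   X*(d - e*(K1+K2)) + Y*(d - K2 - e*K1) by rewrite -Hd; ring.
rewrite E.
have S1 : h * d / 2 <= X*(d - e*(K1+K2)).
  have : d / 2 <= d - e*(K1+K2) by lra.
  move=> H; apply: le_trans (_ : X * (d/2) <= _); last by apply: ler_wpM2l => //; lra.
  nra.
have S2 : - (N * p*(K1+K2)) <= Y*(d - K2 - e*K1).
  have H1 : - (K1 + K2) <= d - K2 - e*K1 by nra.
  have H2 : - (Y*(K1+K2)) <= Y*(d - K2 - e*K1) by rewrite -mulrN; apply: ler_wpM2l.
  apply: le_trans H2; rewrite lerN2; apply: ler_wpM2r; lra.
lra.
Qed.
Section Pre.
Variable R : realFieldType.
Variable n : nat.
Variable A : 'I_n -> finType.
Local Notation prof := {dffun forall i : 'I_n, A i}.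
Local Notation Theta := {ffun prof -> R}.

Lemma in_supp_prof (S : 'I_n -> seq Theta) (k : {dffun forall j, 'I_(size (S j))}) :
  in_supp S (prof_of k).
Proof. by move=> j; rewrite /prof_of mem_nth. Qed.

Lemma prof_of_supp (S : 'I_n -> seq Theta) th : in_supp S th ->
  exists k : {dffun forall j, 'I_(size (S j))}, prof_of k = th.
Proof.
move=> H.
have Hk : forall j, (index (th j) (S j) < size (S j))%N by move=> j; rewrite index_mem.
exists (finfun (fun j => Ordinal (Hk j))).
by apply: functional_extensionality => j; rewrite /prof_of ffunE /= nth_index.
Qed.

Lemma wgt_gt0 (p : R) (T : {set 'I_n}) : 0 < p -> p < 1 -> 0 < wgt p T.
Proof. by move=> p0 p1; rewrite /wgt mulr_gt0 // exprn_gt0 // subr_gt0. Qed.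

Lemma wgt1_gt0 (p : R) (T : {set 'I_n}) : 0 < p -> p < 1 -> 0 < wgt1 p T.
Proof. by move=> p0 p1; rewrite /wgt1 mulr_gt0 // exprn_gt0 // subr_gt0. Qed.

Lemma fs_pos (S : 'I_n -> seq Theta) w : (forall j, is_fsdist (S j) (w j)) ->
  forall j t, t \in S j -> 0 < w j t.
Proof. by move=> H j; case: (H j). Qed.

Lemma mixT_mixed (p : R) (S : 'I_n -> seq Theta) w b s : is_eq p S w b s ->
  forall th, in_supp S th -> forall T j, is_mixed (mixT T b s th j).
Proof.
move=> Heq th Hth T j; rewrite /mixT; case: ifP => _.
  exact: (Heq.2 j (th j) (Hth j)).1.
exact: (Heq.1 th Hth j).1.
Qed.

Lemma pre_pure (p : R) (S : 'I_n -> seq Theta) w b s (astar : prof) : 0 < p -> p < 1 ->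
 (forall j, is_fsdist (S j) (w j)) -> is_eq p S w b s ->
 (forall a, outcome p S w b s a = (a == astar)%:R) ->
 forall th, in_supp S th -> forall j x,
   b th j x = (x == astar j)%:R /\ s j (th j) x = (x == astar j)%:R.
Proof.
move=> p0 p1 Hfs Heq Hout th Hth.
have [k Hk] := prof_of_supp Hth.
have Hmix := mixT_mixed Heq.
have H0 : forall T (a : prof), a != astar -> \prod_j mixT T b s th j (a j) = 0.
  move=> T a aa; have := Hout a; rewrite (negbTE aa) /outcome /Emu => Hs.
  have Hge : forall k' : {dffun forall j, 'I_(size (S j))}, true ->
     0 <= (\prod_j w j (prof_of k' j)) *
          \sum_T wgt p T * \prod_j mixT T b s (prof_of k') j (a j).
    move=> k' _; apply: mulr_ge0.
      by apply: prodr_ge0 => j _; apply: ltW; apply: (fs_pos Hfs); exact: in_supp_prof.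
    apply: sumr_ge0 => T' _; apply: mulr_ge0; first exact/ltW/wgt_gt0.
    apply: prodr_ge0 => j _; have [] := Hmix _ (in_supp_prof k') T' j; done.
  have := psumr_eq0P Hge Hs (i:=k) isT; rewrite Hk => /eqP; rewrite mulf_eq0 => /orP[].
    rewrite gt_eqF //; apply: prodr_gt0 => j _; apply: (fs_pos Hfs).
    by rewrite -Hk; exact: in_supp_prof.
  move=> /eqP Hs2.
  have Hge2 : forall T', true -> 0 <= wgt p T' * \prod_j mixT T' b s th j (a j).
    move=> T' _; apply: mulr_ge0; first exact/ltW/wgt_gt0.
    apply: prodr_ge0 => j _; have [] := Hmix _ Hth T' j; done.
  have := psumr_eq0P Hge2 Hs2 (i:=T) isT => /eqP; rewrite mulf_eq0 gt_eqF ?wgt_gt0 //=.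
  by move/eqP.
move=> j x; split.
  by have := pure_of_zero (Hmix _ Hth set0) (H0 set0) x; rewrite /mixT in_set0.
by have := pure_of_zero (Hmix _ Hth setT) (H0 setT) x; rewrite /mixT in_setT.
Qed.
End Pre.

Section Main.
Variable R : realFieldType.
Variable n : nat.
Variable A : 'I_n -> finType.
Variable pi : 'I_n -> {dffun forall i : 'I_n, A i} -> R.
Variable astar : {dffun forall i : 'I_n, A i}.
Variable i : 'I_n.
Variable a : {dffun forall i : 'I_n, A i}.
Hypothesis Ha : forall j, j != i -> a j = astar j.
Hypothesis Hgap : pi i astar < pi i a.
Local Notation prof := {dffun forall i : 'I_n, A i}.
Local Notation Theta := {ffun prof -> R}.

Definition dd := pi i a - pi i astar.
Definition K1 := \sum_(x : prof) `|pi i x - pi i astar|.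
Definition K2 := \sum_(x : prof) `|pi i x - pi i a|.
Definition NN := \sum_(T : {set 'I_n}) (1 : R).
Definition hh := (2^-1 : R) ^+ n.
Definition pbar := Num.min (2^-1) (hh * dd / (2 * (NN * (K1 + K2) + 1))).

Lemma dd_gt0 : 0 < dd. Proof. by rewrite /dd subr_gt0. Qed.
Lemma K1_ge0 : 0 <= K1. Proof. by apply: sumr_ge0 => x _. Qed.
Lemma K2_ge0 : 0 <= K2. Proof. by apply: sumr_ge0 => x _. Qed.
Lemma NN_ge0 : 0 <= NN. Proof. by apply: sumr_ge0 => x _. Qed.
Lemma hh_gt0 : 0 < hh. Proof. by rewrite /hh exprn_gt0 // invr_gt0 ltr0n. Qed.

Lemma pbar_gt0 : 0 < pbar.
Proof.
rewrite /pbar lt_min invr_gt0 ltr0n /= divr_gt0 ?mulr_gt0 ?hh_gt0 ?dd_gt0 //.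
have := NN_ge0; have := K1_ge0; have := K2_ge0; nra.
Qed.

Lemma pbar_lt1 : pbar < 1.
Proof.
apply: le_lt_trans (_ : 2^-1 < 1); first by rewrite /pbar ge_min lexx.
by rewrite invf_lt1 // ltr1n.
Qed.

Lemma key (p : R) : 0 < p -> p < pbar -> ~ stable_profile pi p astar.
Proof.
move=> p0 ppb [S [w [b [s [Hfs Heq Hstab Hout]]]]].
have [pl1 pl2] : p < 2^-1 /\ p < hh * dd / (2 * (NN * (K1 + K2) + 1)).
  by move: ppb; rewrite /pbar lt_min => /andP.
have p1 : p < 1 by apply: (lt_trans pl1); rewrite invf_lt1 // ltr1n.
have HpN : 2 * NN * p * (K1 + K2) < hh * dd.
  move: pl2; rewrite ltr_pdivlMr; last first.
    by rewrite mulr_gt0 // ltr_wpDl // mulr_ge0 ?NN_ge0 // addr_ge0 ?K1_ge0 ?K2_ge0.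
  have := NN_ge0; have := K1_ge0; have := K2_ge0; nra.
have Hpre := pre_pure p0 p1 Hfs Heq Hout.
have Hsz : forall j, (0 < size (S j))%N.
  move=> j; case: (Hfs j) => _ _; case: (S j) => //=; rewrite big_nil => /eqP.
  by rewrite eq_sym oner_eq0.
have Huniq : uniq (S i) by case: (Hfs i).
pose t0 := nth (th0 R A) (S i) 0.
have t0S : t0 \in S i by rewrite mem_nth.
pose c := 1 + \sum_(t <- S i) `|t a|.
have c_gt0 : 0 < c.
  rewrite /c; apply: (lt_le_trans ltr01); rewrite lerDl; apply: sumr_ge0 => t _; exact: normr_ge0.
pose thm : Theta := [ffun x : prof => c * (x i == a i)%:R].
have thmS : thm \notin S i.
  apply/negP => H; move: (erefl c); rewrite {2}/c (bigD1_seq thm H Huniq) /= ffunE eqxx mulr1.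
  have : 0 <= \sum_(t <- S i | t != thm) `|t a| by apply: sumr_ge0.
  have := ler_norm c; lra.
pose tt := fun _ : 'I_n => thm.
pose eta := Num.min 1 (dd / (2 * (K1 + K2 + 1))).
have eta_gt0 : 0 < eta.
  rewrite /eta lt_min ltr01 /= divr_gt0 ?dd_gt0 // mulr_gt0 //.
  by rewrite ltr_pwDr // addr_ge0 ?K1_ge0 ?K2_ge0.
case: Hstab => Hbal Hst.
have HJ0 : [set i] != set0 by apply/set0Pn; exists i; rewrite set11.
have Htt : forall j, j \in [set i] -> tt j \notin S j by move=> j /set1P ->.
have [etab [epsb [[e0 e1 eb0 eb1] Hall]]] := Hst [set i] HJ0 tt Htt eta eta_gt0.
have [el1 el2] : etab < 1 /\ 2 * etab * (K1 + K2) < dd.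
  move: e1; rewrite /eta lt_min => /andP[H1 H2]; split => //.
  move: H2; rewrite ltr_pdivlMr; last by rewrite mulr_gt0 // ltr_pwDr // addr_ge0 ?K1_ge0 ?K2_ge0.
  have := K1_ge0; have := K2_ge0; nra.
pose eps := fun _ : 'I_n => epsb / 2.
have Hmax : \big[Num.max/0]_(j in [set i]) eps j = epsb / 2.
  by rewrite -big_enum enum_set1 big_cons big_nil /= max_l // ltW // divr_gt0.
have He1 : forall j, j \in [set i] -> 0 < eps j /\ eps j < 1 by move=> j _; rewrite /eps; split; lra.
have He2 : 0 < \big[Num.max/0]_(j in [set i]) eps j by rewrite Hmax; lra.
have He3 : \big[Num.max/0]_(j in [set i]) eps j < epsb by rewrite Hmax; lra.
have [[b' [s' Hnear]] Hdisj] := Hall eps He1 He2 He3.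
pose S' := postS S [set i] tt.
pose w' := postw w [set i] tt eps.
have Hlt : fitness pi p S' w' b' s' i t0 < fitness pi p S' w' b' s' i thm.
  have HS'i : S' i = rcons (S i) thm by rewrite /S' /postS set11.
  have HS'j : forall j, j != i -> S' j = S j.
    by move=> j ji; rewrite /S' /postS in_set1 (negbTE ji).
  have Hw' : forall j t, j != i -> w' j t = w j t.
    by move=> j t ji; rewrite /w' /postw in_set1 (negbTE ji).
  have HmemS' : forall j t, t \in S j -> t \in S' j.
    move=> j t; case: (eqVneq j i) => [->|ji]; last by rewrite HS'j.
    by rewrite HS'i mem_rcons inE => ->; rewrite orbT.
  have Hsupp' : forall th, in_supp S th -> in_supp S' th by move=> th H j; apply: HmemS'.
  have Hsupp : forall k : {dffun forall j, 'I_(size (S' j))},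
      prof_of k i \in S i -> in_supp S (prof_of k).
    move=> k Hi j; case: (eqVneq j i) => [->//|ji].
    by move: (in_supp_prof k j); rewrite HS'j.
  have HWpos : forall k : {dffun forall j, 'I_(size (S' j))},
      0 < \prod_(j < n | j != i) w' j (prof_of k j).
    move=> k; apply: prodr_gt0 => j ji; rewrite Hw' //; apply: (fs_pos Hfs).
    by move: (in_supp_prof k j); rewrite HS'j.
  have Hmix' := mixT_mixed Hnear.1.
  have Hidxm : index thm (S' i) = size (S i).
    by rewrite HS'i -cats1 index_cat (negbTE thmS) /= eqxx addn0.
  have Hidx0 : index t0 (S' i) = 0%N.
    by rewrite HS'i -cats1 index_cat t0S index_uniq.
  have Hlt_m : (size (S i) < size (S' i))%N by rewrite HS'i size_rcons.
  have Hlt_0 : (0 < size (S' i))%N by rewrite HS'i size_rcons.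
  pose xm := Ordinal Hlt_m.
  pose x0 := Ordinal Hlt_0.
  have Hprm : forall k : {dffun forall j, 'I_(size (S' j))}, k i == xm -> prof_of k i = thm.
    move=> k /eqP Hk; rewrite /prof_of Hk /=.
    by rewrite HS'i nth_rcons ltnn eqxx.
  have Hpr0 : forall k : {dffun forall j, 'I_(size (S' j))}, prof_of (upd k x0) i = t0.
    by move=> k; rewrite /prof_of upd_in /= HS'i nth_rcons Hsz.
  have Hprj : forall (k : {dffun forall j, 'I_(size (S' j))}) j, j != i ->
      prof_of (upd k x0) j = prof_of k j.
    by move=> k j ji; rewrite /prof_of upd_out // eq_sym.
  have Hsz' : forall j, (0 < size (S' j))%N.
    move=> j; case: (eqVneq j i) => [->//|ji]; by rewrite HS'j.
  have Hexk : exists k0 : {dffun forall j, 'I_(size (S' j))}, k0 i == xm.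
    by exists (upd (finfun (fun j => Ordinal (Hsz' j))) xm); rewrite upd_in.
  have Hsupp0 : forall k : {dffun forall j, 'I_(size (S' j))}, in_supp S (prof_of (upd k x0)).
    by move=> k; apply: Hsupp; rewrite Hpr0.
  have Hcond : forall (k : {dffun forall j, 'I_(size (S' j))}) (x : 'I_(size (S' i))),
      ((k i : nat) == x) = (k i == x).
    by move=> k x; rewrite -val_eqE.
  have Hsm : forall x, s' i thm x = (x == a i)%:R.
    have thmS' : thm \in S' i by rewrite HS'i mem_rcons inE eqxx.
    have [Hmx Hopt] := Hnear.1.2 i thm thmS'.
    pose W1 := \sum_(T : {set 'I_n} | i \notin T) wgt1 p T.
    have W1pos : 0 < W1.
      apply: sum_pos; first by exists set0; rewrite in_set0.
      by move=> T _; apply: wgt1_gt0.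
    have HVb : forall (k : {dffun forall j, 'I_(size (S' j))}) sigma, k i == xm ->
        is_mixed sigma -> Vb p b' s' (prof_of k) sigma = c * sigma (a i) * W1.
      move=> k sigma Hk Hs; rewrite /Vb /W1 mulr_sumr; apply: eq_bigr => T iT.
      rewrite payoff_devE (Hprm k Hk).
      have -> : (fun x : prof => thm x) = (fun x : prof => c * (x i == a i)%:R).
        by apply: functional_extensionality => x; rewrite ffunE.
      rewrite payoff_pure ?dfwith_in; first by rewrite mulrC.
      move=> j; case: (eqVneq i j) => [<-|ij]; first by rewrite dfwith_in.
      by rewrite dfwith_out //; apply: Hmix'; exact: in_supp_prof.
    pose E := \sum_(k : {dffun forall j, 'I_(size (S' j))} | (k i : nat) == index thm (S' i))
        (\prod_(j < n | j != i) w' j (prof_of k j)) * (c * W1).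
    have HVs : forall sigma, is_mixed sigma -> Vs p S' w' b' s' thm sigma = sigma (a i) * E.
      move=> sigma Hs; rewrite /Vs /Emi /E mulr_sumr; apply: eq_bigr => k Hk.
      rewrite HVb //; first by ring.
      by rewrite -Hcond /= -Hidxm.
    have Epos : 0 < E.
      apply: sum_pos.
        by have [k0 Hk0] := Hexk; exists k0; rewrite Hidxm (eqP Hk0).
      by move=> k _; rewrite mulr_gt0 ?HWpos // mulr_gt0.
    pose sigma0 : {ffun A i -> R} := [ffun x => (x == a i)%:R].
    have Hs0 : is_mixed sigma0.
      split; first by move=> x; rewrite ffunE ler0n.
      rewrite (bigD1 (a i)) //= ffunE eqxx big1 ?addr0 // => x xa.
      by rewrite ffunE (negbTE xa).
    have := Hopt sigma0 Hs0; rewrite !HVs // ffunE eqxx mul1r => H.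
    apply: mixed_pt => //; by rewrite -(ler_pM2r Epos) mul1r.
  pose g := fun th => \sum_(T : {set 'I_n}) wgt p T * payoff (pi i) (mixT T b' s' th).
  pose Wall := \sum_(T : {set 'I_n}) wgt p T.
  pose Wb := \sum_(T : {set 'I_n} | T != setT) wgt p T.
  have HWall : Wall = wgt p [set: 'I_n] + Wb by rewrite /Wall (bigD1 setT).
  have Hclose_b : forall th, in_supp S th -> forall j x, x != astar j -> b' th j x <= etab.
    move=> th Hth j x xa; have := (Hnear.2 th Hth j).1 => /mdist_le /(_ x).
    rewrite (Hpre th Hth j x).1 (negbTE xa) subr0 => H; exact: le_trans (ler_norm _) H.
  have Hclose_s : forall th, in_supp S th -> forall j x, x != astar j -> s' j (th j) x <= etab.
    move=> th Hth j x xa; have := (Hnear.2 th Hth j).2 => /mdist_le /(_ x).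
    rewrite (Hpre th Hth j x).2 (negbTE xa) subr0 => H; exact: le_trans (ler_norm _) H.
  have Hginc : forall th, in_supp S th -> g th <= Wall * (pi i astar + etab * K1).
    move=> th Hth; rewrite /g /Wall mulr_suml; apply: ler_sum => T _.
    apply: ler_wpM2l; first exact/ltW/wgt_gt0.
    have := close_payoff (pi i) (Hmix' th (Hsupp' th Hth) T) (c:=astar) (e:=etab).
    have H : forall l x, x != astar l -> mixT T b' s' th l x <= etab.
      by move=> l x xa; rewrite /mixT; case: ifP => _; [exact: Hclose_s | exact: Hclose_b].
    move/(_ H); rewrite ler_norml => /andP[_ H2]; rewrite /K1; lra.
  have Hgmut : forall k : {dffun forall j, 'I_(size (S' j))}, k i == xm ->
      wgt p [set: 'I_n] * (pi i a - etab * K2) + Wb * (pi i a - K2) <= g (prof_of k).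
    move=> k Hk; rewrite /g (bigD1 setT) //=; apply: lerD.
      apply: ler_wpM2l; first exact/ltW/wgt_gt0.
      have := close_payoff (pi i) (Hmix' _ (in_supp_prof k) setT) (c:=a) (e:=etab).
      have H : forall l x, x != a l -> mixT setT b' s' (prof_of k) l x <= etab.
        move=> l x xa; rewrite /mixT in_setT.
        case: (eqVneq l i) => [Eli|li].
          subst l; by rewrite (Hprm k Hk) Hsm (negbTE xa).
        rewrite -(Hprj k l li); apply: Hclose_s => //; by rewrite -Ha.
      move/(_ H); rewrite ler_norml => /andP[H2 _]; rewrite /K2; lra.
    rewrite /Wb mulr_suml; apply: ler_sum => T _.
    apply: ler_wpM2l; first exact/ltW/wgt_gt0.
    have := close_payoff (pi i) (Hmix' _ (in_supp_prof k) T) (c:=a) (e:=1).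
    have H : forall l x, x != a l -> mixT T b' s' (prof_of k) l x <= 1.
      by move=> l x _; have /andP[] := mixed_le1 (Hmix' _ (in_supp_prof k) T l) x.
    move/(_ H); rewrite ler_norml mul1r => /andP[H2 _]; rewrite /K2; lra.
  have HwT : wgt p [set: 'I_n] = (1 - p) ^+ n by rewrite /wgt cardsT card_ord subnn expr0 mul1r.
  have HhX : hh <= wgt p [set: 'I_n].
    rewrite HwT /hh; apply: lerXn2r; rewrite ?nnegrE; lra.
  have Wb0 : 0 <= Wb by apply: sumr_ge0 => T _; exact/ltW/wgt_gt0.
  have WbN : Wb <= NN * p.
    apply: (@le_trans _ _ (\sum_(T : {set 'I_n} | T != setT) p)).
      apply: ler_sum => T TT.
      have HT : (#|T| < n)%N.
        rewrite ltn_neqAle; have := max_card (mem T); rewrite card_ord => ->; rewrite andbT.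
        apply: contraNneq TT => HT; by rewrite eqEcard subsetT cardsT card_ord HT leqnn.
      rewrite /wgt.
      have -> : (n - #|T| = (n - #|T|).-1.+1)%N by rewrite prednK // subn_gt0.
      rewrite exprS.
      have := exprn_ge0 (n - #|T|).-1 (ltW p0); have := exprn_ile1 (n - #|T|).-1 (ltW p0) (ltW p1).
      have : 0 <= 1 - p by lra.
      move=> /(exprn_ge0 #|T|) H1; have : 1 - p <= 1 by lra.
      have : 0 <= 1 - p by lra.
      move=> H3 H4; have := exprn_ile1 #|T| H3 H4.
      move=> Hy Hx1 Hx0; rewrite -mulrA -[X in _ <= X](mulr1 p) ler_wpM2l //; [exact: ltW | exact: mulr_ile1].
    rewrite /NN mulr_suml mul1r [X in _ <= X](bigID (fun T => T != setT)) /= lerDl.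
    by apply: sumr_ge0 => T _; exact: ltW.
  have Hgap2 : forall k : {dffun forall j, 'I_(size (S' j))}, k i == xm ->
      g (prof_of (upd k x0)) < g (prof_of k).
    move=> k Hk; apply: le_lt_trans (Hginc _ (Hsupp0 k)) _; apply: lt_le_trans (Hgmut k Hk).
    rewrite -subr_gt0 HWall.
    apply: (final_ineq (K1 := K1) (K2 := K2) (h := hh) (N := NN) (p := p)) => //.
    - exact: dd_gt0.
    - exact: K1_ge0.
    - exact: K2_ge0.
    - exact: ltW.
    - exact: hh_gt0.
    - exact: NN_ge0.
    - exact: ltW.
  rewrite /fitness -/g /Emi -subr_gt0.
  rewrite [X in _ - X](eq_bigl (fun k : {dffun forall j, 'I_(size (S' j))} => k i == x0)); last first.
    by move=> k; rewrite Hidx0 -Hcond.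
  rewrite [X in X - _](eq_bigl (fun k : {dffun forall j, 'I_(size (S' j))} => k i == xm)); last first.
    by move=> k; rewrite Hidxm -Hcond.
  rewrite (reidx _ x0 xm) -sumrB; apply: sum_pos => //.
  move=> k Hk.
  have -> : \prod_(j < n | j != i) w' j (prof_of (upd k x0) j) = \prod_(j < n | j != i) w' j (prof_of k j).
    by apply: eq_bigr => j ji; rewrite Hprj.
  by rewrite -mulrBr mulr_gt0 ?HWpos // subr_gt0 Hgap2.
case: (Hdisj b' s' Hnear) => [[j /set1P -> Hj] | Hii].
  by have := Hj t0 t0S; rewrite /tt => /(lt_trans Hlt); rewrite ltxx.
have := Hii i thm t0.
rewrite /S' /postS set11 !mem_rcons !inE eqxx t0S orbT => /(_ isT isT) E.
by move: Hlt; rewrite E ltxx.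
Qed.
End Main.

Unset Implicit Arguments.
Theorem mainTheorem15 (R : realFieldType) (n : nat) (A : 'I_n -> finType)
  (pi : 'I_n -> {dffun forall i : 'I_n, A i} -> R)
  (astar : {dffun forall i : 'I_n, A i}) :
  (forall pbar : R, 0 < pbar -> pbar < 1 ->
     exists p : R, 0 < p /\ p < pbar /\ stable_profile pi p astar) ->
  nash pi astar.
Proof.
move=> H i a Ha; rewrite leNgt; apply/negP => Hgap.
have [p [p0 [pp Hs]]] := H _ (pbar_gt0 Hgap) (pbar_lt1 pi astar i a).
exact: (key Ha Hgap p0 pp Hs).
Qed.
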